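(* Fix a prime $p$ and a finite group $G$. Then: (i) if $N\unlhd G$, then $M_p(G)=M_p(N)M_p(G/N)$; (ii) $M_p(G)\ge |G|/|\mathrm{Ord}(G,p)|$, i.e. the proportion of elements of $G$ of $p$-power order is at least $1/M_p(G)$; (iii) if $G$ is a subdirect subgroup of a direct product $G_1\times\cdots\times G_t$ of finite groups, then $M_p(G)\le\prod_{i=1}^t M_p(G_i)$.
   Context: $\mathrm{Ord}(G,p)$ is the set of elements of $G$ of $p$-power order. For a finite simple group $S$: $M_p(S)=|S|$ if $S$ is cyclic of prime order different from $p$; $M_p(S)=1$ if $S$ is cyclic of order $p$; and if $S$ is nonabelian, $M_p(S)$ is the least $M$ such that for every $p$-element $\alpha\in\mathrm{Aut}(S)$ the coset $S\alpha\subseteq\mathrm{Aut}(S)$ contains a $p$-element $x$ with $|C_S(x)|\le M$. For a finite group $G$, $M_p(G)=\prod M_p(S)$ over the composition factors $S$ of $G$ counted with multiplicity. $G\le G_1\times\cdots\times G_t$ is subdirect if each coordinate projection $G\to G_i$ is surjective. *)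

(* Defs.v *)
From HB Require Import structures.
From mathcomp Require Import all_boot all_fingroup all_solvable.
Set Implicit Arguments. Unset Strict Implicit. Unset Printing Implicit Defensive.
Local Open Scope group_scope.

Section ExtProd.
Variables (t : nat) (gT : 'I_t -> finGroupType).

Definition prodG : Type := {dffun forall i : 'I_t, gT i}.
HB.instance Definition _ := Finite.on prodG.

Definition prodG_mul (f g : prodG) : prodG := [ffun i => f i * g i].
Definition prodG_one : prodG := [ffun i => 1].
Definition prodG_inv (f : prodG) : prodG := [ffun i => (f i)^-1].

Lemma prodG_mulA : associative prodG_mul.
Proof. by move=> f g h; apply/ffunP=> i; rewrite !ffunE mulgA. Qed.
Lemma prodG_mul1 : left_id prodG_one prodG_mul.
Proof. by move=> f; apply/ffunP=> i; rewrite !ffunE mul1g. Qed.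
Lemma prodG_mulV : left_inverse prodG_one prodG_inv prodG_mul.
Proof. by move=> f; apply/ffunP=> i; rewrite !ffunE mulVg. Qed.

HB.instance Definition _ :=
  Finite_isGroup.Build prodG prodG_mulA prodG_mul1 prodG_mulV.

Definition proj (i : 'I_t) (f : prodG) : gT i := (f : {dffun forall i, gT i}) i.
End ExtProd.

Section Mp.
Variable p : nat.

Section SimpleGroup.
Variable gT : finGroupType.

(* For x in Aut(S) (a permutation of gT fixing the outside of S), C_S(x)    *)
(* is identified with the set of points of S fixed by x (S = Inn(S) inside *)
(* Aut(S), S nonabelian simple so Z(S) = 1).                                *)
Definition fixS (S : {set gT}) (x : {perm gT}) : {set gT} :=
  [set s in S | x s == s].

(* M bounds: every p-element a of Aut(S) has a p-element x in the coset    *)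
(* Inn(S) a (x = conj_aut S s * a, s in S) with |C_S(x)| <= M.             *)
Definition MpBound (S : {group gT}) (M : nat) : bool :=
  [forall a in Aut S, p.-elt a ==>
     [exists s in S, p.-elt (conj_aut S s * a) &&
                     (#|fixS S (conj_aut S s * a)| <= M)]].

Lemma MpBound_exists (S : {group gT}) : exists M, MpBound S M.
Proof.
exists #|S|; apply/forall_inP => a _; apply/implyP => pa.
apply/exists_inP; exists 1; first exact: group1.
have -> : conj_aut S 1 = 1 by apply: (morph1 (conj_aut_morphism S)).
rewrite mul1g pa /=; apply: subset_leq_card.
by apply/subsetP => x; rewrite inE => /andP[].
Qed.

Definition Mp_nonab (S : {group gT}) : nat := ex_minn (MpBound_exists S).

(* M_p of a finite simple group S; S is cyclic of prime order iff |S| is *)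
(* prime.                                                                 *)
Definition Mp_simple (S : {group gT}) : nat :=
  if prime #|S| then (if #|S| == p then 1 else #|S|)%N else Mp_nonab S.
End SimpleGroup.

Definition Mp_factor (gT : finGroupType) (H K : {group gT}) : nat :=
  Mp_simple (H / K)%G.

Definition compseries (gT : finGroupType) (G : {group gT}) : seq {group gT} :=
  xchoose (exists_comps G).

Definition Mp (gT : finGroupType) (G : {group gT}) : nat :=
  \prod_(m <- pairmap (@Mp_factor gT) G (compseries G)) m.
End Mp.

Definition Ord (gT : finGroupType) (G : {set gT}) (p : nat) : {set gT} :=
  [set x in G | p.-elt x].

(* Main.v *)
Require Import Defs.
From HB Require Import structures.
From mathcomp Require Import all_boot all_fingroup all_solvable.
Set Implicit Arguments. Unset Strict Implicit. Unset Printing Implicit Defensive.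
Local Open Scope group_scope.

Lemma quo_injm_isog (gT rT : finGroupType) (D A B : {group gT}) (f : {morphism D >-> rT}) :
  'injm f -> A \subset D -> B <| A -> (A / B) \isog (f @* A / f @* B).
Proof.
move=> injf sAD nsBA.
have injg : 'injm (restrm sAD f) by rewrite injm_restrm.
have := sub_isog (subxx (A / B)) (injm_quotm nsBA injg).
rewrite morphim_quotm !morphim_restrm setIid (setIidPr (normal_sub nsBA)).
done.
Qed.


Lemma pre_factor_isog (gT : finGroupType) (N : {group gT}) (A B : {group coset_of N}) :
  B <| A -> (coset N @*^-1 A / coset N @*^-1 B) \isog (A / B).
Proof.
move=> nsBA.
have nsNA : N <| coset N @*^-1 A by rewrite /normal sub_cosetpre; apply: subsetIl.
have nsNB : N <| coset N @*^-1 B by rewrite /normal sub_cosetpre; apply: subsetIl.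
have sBA : coset N @*^-1 B \subset coset N @*^-1 A by apply: morphpreS (normal_sub nsBA).
have nsBA' : coset N @*^-1 B <| coset N @*^-1 A.
  by rewrite morphpre_normal ?sub_im_coset.
have := third_isog (normal_sub nsNB) nsNA nsBA'.
rewrite !cosetpreK isog_sym; done.
Qed.


Section Proj.
Variables (t : nat) (gT : 'I_t -> finGroupType).
Lemma proj_morphM (i : 'I_t) : {in [set: prodG gT] &, {morph @proj t gT i : x y / x * y}}.
Proof. by move=> x y _ _; rewrite /proj /= ffunE. Qed.
Canonical projm i := Morphism (proj_morphM i).
Lemma projmE i f : projm i f = proj i f. Proof. by []. Qed.
Lemma prodG_eq1 (f : prodG gT) : (forall i, proj i f = 1) -> f = 1.
Proof. by move=> H; apply/ffunP=> i; rewrite /= ffunE; apply: H. Qed.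
End Proj.


Lemma lift_pelt (p : nat) (gT : finGroupType) (K : {group gT}) (y : coset_of K) :
  p.-elt y -> exists2 h, h \in 'N(K) & p.-elt h /\ coset K h = y.
Proof.
move=> py.
pose T := (coset K @*^-1 <[y]>)%G.
have [P sylP] := Sylow_exists p T.
have sPN : P \subset 'N(K).
  by apply: subset_trans (pHall_sub sylP) _; apply: subsetIl.
have := morphim_pHall (coset_morphism K) sPN sylP.
rewrite /= morphpreK ?sub_im_coset // => hallP.
have EP := pHall_id hallP py.
have : y \in coset K @* P by rewrite EP cycle_id.
case/morphimP=> h Nh Ph ->; exists h => //; split => //.
exact: mem_p_elt (pHall_pgroup sylP) Ph.
Qed.

Section Base.
Variables (gT : finGroupType) (H N S : {group gT}).
Hypothesis nsNH : N <| H.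
Hypothesis minN : forall K : {group gT}, K <| H -> K \subset N -> K :=: 1 \/ K :=: N.
Hypothesis minS : minnormal S N.
Hypothesis sSN : S \subset N.
Hypothesis nsolN : ~~ solvable N.

Lemma nsSN : S <| N.
Proof. by case/mingroupP: minS => /andP[_ nSN] _; rewrite /normal sSN. Qed.

Lemma ntS : S :!=: 1.
Proof. by case/mingroupP: minS => /andP[]. Qed.

Definition mn (A : {group gT}) := minnormal A N && (A \subset N).

Lemma mnJ (a : gT) (A : {group gT}) : a \in H -> mn A -> mn (A :^ a)%G.
Proof.
move=> Ha /andP[minA sAN].
have NNa : N :^ a = N by apply/normP; rewrite (subsetP (normal_norm nsNH)).
rewrite /mn /= -NNa conjSg sAN andbT.
have := injm_minnormal (injm_conj [set: gT]%G a) (subsetT A) (subsetT N).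
by rewrite !morphim_conj !setTI minA.
Qed.


Lemma mn_norm A : mn A -> N \subset 'N(A).
Proof. by case/andP=> /mingroupP[/andP[]]. Qed.

Lemma mn_cent A B : mn A -> mn B -> A :!=: B -> A \subset 'C(B).
Proof.
move=> mA mB neAB.
have nAN := mn_norm mA; have nBN := mn_norm mB.
case/andP: mA => /mingroupP[_ minA] sAN; case/andP: mB => /mingroupP[_ minB] sBN.
have AB1 : A :&: B = 1.
  apply/eqP; apply: contraR neAB => ntAB.
  have nABN : N \subset 'N(A :&: B) by rewrite normsI.
  have eA : (A :&: B)%G :=: A by apply: minA; rewrite ?ntAB ?subsetIl.
  have eB : (A :&: B)%G :=: B by apply: minB; rewrite ?ntAB ?subsetIr.
  by apply/eqP; rewrite -[LHS]eA; exact: eB.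
apply/commG1P/trivgP; rewrite -AB1 subsetI commg_subl commg_subr.
by rewrite (subset_trans sBN) ?(subset_trans sAN).
Qed.

Lemma mnS : mn S. Proof. by rewrite /mn minS sSN. Qed.

Lemma mnSx x : x \in H -> mn (S :^ x)%G. Proof. by move=> Hx; apply: mnJ mnS. Qed.

Lemma genN : <<class_support S H>> = N.
Proof.
have sCN : <<class_support S H>> \subset N.
  by rewrite gen_subG class_support_sub_norm // normal_norm.
have nCH : <<class_support S H>> <| H.
  by rewrite /normal (subset_trans sCN (normal_sub nsNH)) norms_gen ?class_support_norm.
case: (minN nCH sCN) => // C1.
have : S \subset <<class_support S H>>.
  exact: subset_trans (sub_class_support _ _) (subset_gen _).
by rewrite C1 subG1 (negbTE ntS).
Qed.

Lemma ZN1 : 'Z(N) = 1.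
Proof.
have nZH : 'Z(N) <| H := char_normal_trans (center_char N) nsNH.
case: (minN nZH (center_sub N)) => // ZN.
by case/negP: nsolN; apply: abelian_sol; rewrite -ZN center_abelian.
Qed.

Lemma Snonab : ~~ abelian S.
Proof.
apply/negP=> abS; case/negP: nsolN; apply: abelian_sol.
rewrite -genN abelian_gen /abelian class_supportEr.
apply/bigcupsP=> x Hx; rewrite centsC; apply/bigcupsP=> y Hy; rewrite centsC.
have [E|ne] := eqVneq (S :^ y) (S :^ x).
  by rewrite E; move: abS; rewrite -(abelianJ S x).
by rewrite eq_sym in ne; apply: (mn_cent (mnSx Hx) (mnSx Hy) ne).
Qed.

Lemma NSC : N \subset S * 'C_N(S).
Proof.
have nCS : 'C_N(S) \subset 'N(S) by rewrite subIset // (mn_norm mnS).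
rewrite -norm_joinEr // -genN genS // class_supportEr.
apply/bigcupsP=> x Hx; have [E|ne] := eqVneq (S :^ x) S.
  by rewrite E subsetUl.
apply: subset_trans (subsetUr _ _); rewrite subsetI.
have /andP[_ sSxN] := mnSx Hx.
by rewrite sSxN (mn_cent (mnSx Hx) mnS).
Qed.

Lemma Ssimple : simple S.
Proof.
apply/mingroupP; split; first by rewrite ntS normG.
move=> T /andP[ntT nTS] sTS.
case/mingroupP: minS => _; apply; rewrite // ntT /=.
apply: subset_trans NSC _; rewrite mul_subG // cents_norm //.
by rewrite subIset // orbC centS.
Qed.

Lemma SC1 : S :&: 'C_N(S) = 1.
Proof.
have nZS : 'Z(S) <| S := center_normal S.
have sub : S :&: 'C_N(S) \subset 'Z(S).
  by rewrite /center subsetI subsetIl subIset // subsetIr orbT.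
have Z1 : 'Z(S) = 1.
  case/simpleP: Ssimple => _ /(_ _ nZS) [-> //|ZS].
  by case/negP: Snonab; rewrite -ZS center_abelian.
by apply/trivgP; rewrite -Z1.
Qed.

Variable g : gT.
Hypothesis Hg : <[g]> * N = H.
Variable p : nat.
Hypothesis pg : p.-elt g.

Lemma gH : g \in H.
Proof. by rewrite -Hg; apply/mulsgP; exists g 1; rewrite ?cycle_id ?mulg1. Qed.

Lemma NgH : N :* g \subset H.
Proof. by rewrite mul_subG ?sub1set ?gH ?normal_sub. Qed.

Lemma HxN x : x \in N :* g -> H \subset <[x]> * N.
Proof.
move=> Nx; have Hx : x \in H := subsetP NgH x Nx.
have nNx : <[x]> \subset 'N(N) by rewrite cycle_subG (subsetP (normal_norm nsNH)).
rewrite -norm_joinEl // -Hg mul_subG ?joing_subr // cycle_subG.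
move: Nx; rewrite mem_rcoset => Nxg.
have -> : g = (x * g^-1)^-1 * x by rewrite invMg invgK mulgKV.
apply: groupM; first by rewrite groupV; apply: (subsetP (joing_subr _ _)).
apply: (subsetP (joing_subl _ _)); exact: cycle_id.
Qed.

Lemma centN_x x d : x \in N :* g -> (forall i, d \in 'C(S :^ (x ^+ i))) -> d \in 'C(N).
Proof.
move=> Nx Cd; rewrite -genN cent_gen -sub1set centsC class_supportEr.
apply/bigcupsP=> h Hh; rewrite centsC sub1set.
have /mulsgP[y n /cycleP[i ->] Nn ->] := subsetP (HxN Nx) h Hh.
have Hxi : x ^+ i \in H by rewrite groupX ?(subsetP NgH).
rewrite conjsgM; have /normP-> : n \in 'N(S :^ x ^+ i).
  by rewrite (subsetP (mn_norm (mnSx Hxi))).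
exact: Cd.
Qed.

Lemma decomp_uniq f1 f2 c1 c2 : f1 \in S -> f2 \in S -> c1 \in 'C_N(S) -> c2 \in 'C_N(S) ->
  f1 * c1 = f2 * c2 -> f1 = f2.
Proof.
move=> Sf1 Sf2 Cc1 Cc2 E.
have : f2^-1 * f1 \in S :&: 'C_N(S).
  rewrite inE groupM ?groupV //=.
  have -> : f2^-1 * f1 = c2 * c1^-1 by rewrite -(mulgK c1 f1) E -!mulgA mulKg.
  by rewrite groupM ?groupV.
rewrite SC1 inE => /eqP E1.
by rewrite -(mulKVg f2 f1) E1 mulg1.
Qed.

Definition kP j := (0 < j) && (S :^ (g ^+ j) == S).
Lemma kP_ex : exists j, kP j.
Proof. by exists #[g]; rewrite /kP order_gt0 expg_order conjsg1 eqxx. Qed.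
Definition k := ex_minn kP_ex.

Lemma k_spec : [/\ 0 < k, S :^ g ^+ k = S & forall j, 0 < j < k -> S :^ g ^+ j != S].
Proof.
rewrite /k; case: ex_minnP => m /andP[m0 /eqP Sm] mmin; split => // j /andP[j0 jm].
by apply/negP=> /eqP Sj; have := mmin j; rewrite /kP j0 Sj eqxx => /(_ isT); rewrite leqNgt jm.
Qed.

Lemma Sgk q : S :^ (g ^+ k) ^+ q = S.
Proof.
have [_ Sk _] := k_spec.
by elim: q => [|q IH]; rewrite ?expg0 ?conjsg1 // expgSr conjsgM IH Sk.
Qed.

Lemma k_dvd j : S :^ g ^+ j = S -> k %| j.
Proof.
move=> Sj; have [k0 Sk kmin] := k_spec.
rewrite /dvdn; apply: contraTT isT => r0.
have : S :^ g ^+ (j %% k) = S.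
  move: Sj; rewrite {1}(divn_eq j k) expgD mulnC expgM conjsgM Sgk //.
have : 0 < j %% k < k by rewrite lt0n r0 ltn_pmod.
by move/kmin => ne E; rewrite E eqxx in ne.
Qed.

Lemma pk : p.-nat k.
Proof. apply: pnat_dvd pg; apply: k_dvd; by rewrite expg_order conjsg1. Qed.

Lemma mn_inv j : 0 < j < k -> (S :^ (g ^- j))%G :!=: S.
Proof.
have [_ _ kmin] := k_spec; move=> /kmin; apply: contra => /eqP E.
by rewrite -{1}E /= conjsgKV.
Qed.

Lemma xpow s j : s \in S -> 0 < j <= k -> exists2 c, c \in 'C_N(S) & (s * g) ^+ j = s * c * g ^+ j.
Proof.
move=> Ss; elim: j => [//|j IH] /andP[_ jk].
case: (posnP j) => [->|j0].
  by exists 1; rewrite ?group1 // expg1 mulg1.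
have jk' : 0 < j <= k by rewrite j0 ltnW.
have jk'' : 0 < j < k by rewrite j0 jk.
have [c Cc E] := IH jk'.
have gjH : g ^- j \in H by rewrite groupV groupX ?gH.
have sub : S :^ g ^- j \subset 'C_N(S).
  have /andP[_ sN] := mnSx gjH.
  by rewrite subsetI sN (mn_cent (mnSx gjH) mnS (mn_inv jk'')).
exists (c * s ^ (g ^- j)).
  by rewrite groupM // (subsetP sub) // memJ_conjg.
rewrite expgSr E conjgE invgK expgSr !mulgA mulgKV //.
Qed.

Lemma fixJ (d z : gT) : z \in 'C[d] -> d ^ z = d.
Proof. by move/cent1P=> cdz; rewrite conjgE -cdz mulKg. Qed.

Lemma CHN_pgroup : p.-group 'C_H(N).
Proof.
have sCN : 'C_H(N) \subset 'N(N) by rewrite subIset // normal_norm.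
have TI : N :&: 'C_H(N) = 1.
  apply/trivgP; rewrite -ZN1 /center subsetI subsetIl.
  by rewrite subIset // subsetIr orbT.
rewrite (isog_pgroup p (quotient_isog sCN TI)).
apply: pgroupS (_ : 'C_H(N) / N \subset <[g]> / N) _.
  by rewrite -(quotientMidr N <[g]>) Hg quotientS // subsetIl.
exact: morphim_pgroup.
Qed.

Lemma cent_all x d : x \in N :* g -> d \in 'C(S) -> d \in 'C[x] -> d \in 'C(N).
Proof.
move=> Nx CSd Cxd; apply: (centN_x Nx) => i.
rewrite centJ mem_conjg fixJ //.
by rewrite groupV groupX // -cent1C.
Qed.

Lemma base_main : #|N| <= Mp_nonab p S * #|[set y in N :* g | p.-elt y]|.
Proof.
have [k0 Sk kmin] := k_spec.
have gkN : g ^+ k \in 'N(S) by apply/normP.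
set a := conj_aut S (g ^+ k).
have Aa : a \in Aut S by rewrite Aut_aut.
have pa : p.-elt a := morph_p_elt (conj_aut_morphism S) gkN (p_eltX k pg).
rewrite /Mp_nonab; case: ex_minnP => M HM _.
move/forall_inP: HM => /(_ a Aa); rewrite pa /= => /exists_inP[s Ss /andP[pb fb]].
set b := conj_aut S s * a in pb fb.
set x := s * g.
have [c Cc Exk] := xpow Ss (introT andP (conj k0 (leqnn k))).
have sNS : s \in 'N(S) by rewrite (subsetP (normG S)).
have cNS : c \in 'N(S) by rewrite (subsetP (cent_sub S)) // (subsetP (subsetIr N _)).
have xkN : x ^+ k \in 'N(S) by rewrite Exk !groupM.
have Eb : conj_aut S (x ^+ k) = b.
  rewrite Exk !conj_aut_morphM ?groupM // (mker (x := c)) ?mulg1 //.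
  by rewrite ker_conj_aut (subsetP (subsetIr N _)).
have Nx : x \in N :* g by rewrite mem_rcoset /x mulgK (subsetP sSN).
have Hx : x \in H := subsetP NgH x Nx.
have px : p.-elt x.
  set m := #[b].
  have zN : x ^+ (k * m) \in 'N(S) by rewrite expgM groupX.
  have zC : x ^+ (k * m) \in 'C(S).
    rewrite -ker_conj_aut; apply/kerP => //.
    have E2 : conj_aut S ((x ^+ k) ^+ m) = (conj_aut S (x ^+ k)) ^+ m :=
      morphX (conj_aut_morphism S) m xkN.
    by change (conj_aut S (x ^+ (k * m)) = 1); rewrite expgM E2 Eb expg_order.
  have zCN : x ^+ (k * m) \in 'C_H(N).
    rewrite inE; apply/andP; split; first exact: groupX.
    apply: (cent_all Nx zC).
    by rewrite groupX ?cent1id.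
  have pz : p.-elt (x ^+ (k * m)) := mem_p_elt CHN_pgroup zCN.
  rewrite /p_elt -(divnK (dvdn_gcdl #[x] (k * m))) pnatM.
  rewrite -orderXgcd; apply/andP; split; first exact: pz.
  apply: pnat_dvd (dvdn_gcdr _ _) _.
  by rewrite pnatM pk.
set y := x ^+ k.
have Hy : y \in H by rewrite groupX.
have yNN : y \in 'N(N) by rewrite (subsetP (normal_norm nsNH)).
have yNC : y \in 'N('C(S)) by apply/normP; rewrite -centJ (normP xkN).
pose phi d := odflt 1 [pick f in S | f^-1 * d \in 'C_N(S)].
have phiP : forall d, d \in N -> phi d \in S /\ (phi d)^-1 * d \in 'C_N(S).
  move=> d Nd; rewrite /phi; case: pickP => [f /andP[Sf Cf] | none] //=.
  have := subsetP NSC d Nd; case/mulsgP=> f1 c1 Sf Cc' Ed.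
  by have := none f1; rewrite Sf Ed mulKg Cc'.
have DF : #|'C_N[x]| <= #|fixS S b|.
  rewrite -(card_in_imset (f := phi)); last first.
    move=> d1 d2 /setIP[Nd1 Cd1] /setIP[Nd2 Cd2] E.
    have [_ C1] := phiP d1 Nd1; have [_ C2] := phiP d2 Nd2.
    rewrite E in C1.
    have eC : d1^-1 * d2 \in 'C_N(S).
      have -> : d1^-1 * d2 = ((phi d2)^-1 * d1)^-1 * ((phi d2)^-1 * d2).
        by rewrite invMg invgK !mulgA mulgK.
      by rewrite groupM ?groupV.
    have eD : d1^-1 * d2 \in 'C[x] by rewrite groupM ?groupV.
    have : d1^-1 * d2 \in 'Z(N).
      rewrite /center inE (subsetP (subsetIl N _) _ eC) /=.
      apply: (cent_all Nx) eD; exact: (subsetP (subsetIr N _)).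
    by rewrite ZN1 inE => /eqP/(canRL (mulKVg d1)); rewrite mulg1.
  apply: subset_leq_card; apply/subsetP=> _ /imsetP[d /setIP[Nd Cd] ->].
  have [Sf Cd0] := phiP d Nd; set f0 := phi d in Sf Cd0 *; set c0 := f0^-1 * d in Cd0.
  have Edc : d = f0 * c0 by rewrite /c0 mulKVg.
  rewrite inE Sf /= -Eb (norm_conj_autE xkN Sf); apply/eqP.
  have dy : d ^ y = d by apply: fixJ; rewrite groupX // -cent1C.
  have Sfy : f0 ^ y \in S by rewrite memJ_norm.
  have Ccy : c0 ^ y \in 'C_N(S).
    move/setIP: Cd0 => [Nc CSc]; apply/setIP; split; by rewrite memJ_norm.
  apply: (decomp_uniq Sfy Sf Ccy Cd0).
  by rewrite -conjMg -Edc.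
have cls : x ^: N \subset [set y0 in N :* g | p.-elt y0].
  apply/subsetP=> _ /imsetP[n Nn ->]; rewrite inE p_eltJ px andbT.
  rewrite mem_rcoset conjgE.
  have -> : n^-1 * (x * n) * g^-1 = n^-1 * (x * g^-1) * (n ^ g^-1).
    by rewrite conjgE invgK !mulgA mulgKV.
  apply: groupM; first apply: groupM; first by rewrite groupV.
    by rewrite -mem_rcoset.
  by rewrite memJ_norm // groupV (subsetP (normal_norm nsNH)) ?gH.
rewrite -(Lagrange (subsetIl N 'C[x])) index_cent1.
exact: leq_mul (leq_trans DF fb) (subset_leq_card cls).
Qed.
End Base.

Section Main.
Variable p : nat.


Lemma MpBound_isog (gT rT : finGroupType) (S : {group gT}) (S' : {group rT}) M :
  S \isog S' -> MpBound p S M -> MpBound p S' M.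
Proof.
case/isogP=> f injf eqS HB.
have -> : S' = (f @* S)%G by apply: val_inj; rewrite /= eqS.
apply/forall_inP=> a' Aa'; apply/implyP=> pa'.
have sSS : S \subset S by [].
have : a' \in Aut_isom injf sSS @* Aut S by rewrite im_Aut_isom.
case/morphimP=> a _ Aa Ea'; subst a'.
have pa : p.-elt a.
  have ord : #[Aut_isom injf sSS a] = #[a] := order_injm (injm_Aut_isom injf sSS) Aa.
  rewrite /p_elt -ord; exact: pa'.
move/forall_inP: HB => /(_ a Aa); rewrite pa /= => /exists_inP[s Ss /andP[ps fs]].
have Ac : conj_aut S s \in Aut S by rewrite Aut_aut.
have Aca : conj_aut S s * a \in Aut S by rewrite groupM.
have Eiso : Aut_isom injf sSS (conj_aut S s * a) = conj_aut (f @* S) (f s) * Aut_isom injf sSS a.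
  rewrite (Aut_isomM injf sSS Ac Aa); congr (_ * _).
  apply: (@eq_Aut _ (f @* S)); rewrite ?Aut_Aut_isom ?Aut_aut // => y' /morphimP[y _ Sy ->].
  rewrite Aut_isomE // conj_autE // morphJ // conj_autE //; exact: mem_morphim.
apply/exists_inP; exists (f s); first exact: mem_morphim.
have ord : #[Aut_isom injf sSS (conj_aut S s * a)] = #[conj_aut S s * a] :=
  order_injm (injm_Aut_isom injf sSS) Aca.
rewrite -Eiso /p_elt; apply/andP; split; first by rewrite -/(p_elt p _) -/(p_elt p _) in ps *; rewrite /p_elt ord.
apply: leq_trans fs; apply: leq_trans (leq_imset_card f _).
apply: subset_leq_card; apply/subsetP=> y'; rewrite inE => /andP[/morphimP[y _ Sy ->]].
rewrite Aut_isomE // => /eqP eq1.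
apply/imsetP; exists y => //; rewrite inE Sy /=; apply/eqP.
by apply: (injmP injf) => //; exact: Aut_closed.
Qed.

Lemma Mp_simple_isog (gT rT : finGroupType) (S : {group gT}) (S' : {group rT}) :
  S \isog S' -> Mp_simple p S = Mp_simple p S'.
Proof.
move=> iso; rewrite /Mp_simple (card_isog iso); case: ifP => // _.
rewrite /Mp_nonab; apply: eq_ex_minn => M; apply/idP/idP.
  exact: MpBound_isog.
by apply: MpBound_isog; rewrite isog_sym.
Qed.

Definition phis (gT : finGroupType) (sec : section gT) := Mp_simple p (section_group sec).

Lemma pairmap_phis gT (G : {group gT}) s :
  pairmap (@Mp_factor p gT) G s = map (@phis gT) (pairmap (@mkSec _) G s).
Proof. by elim: s G => //= H s IH G; rewrite IH. Qed.

Lemma Mp_comps gT (G : {group gT}) s : comps G s ->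
  Mp p G = (\prod_(m <- pairmap (@Mp_factor p gT) G s) m)%N.
Proof.
move=> cs; rewrite /Mp /compseries; have cs0 := xchooseP (exists_comps G).
rewrite !pairmap_phis.
have E t : map (@phis gT) (pairmap (@mkSec _) G t) = map (@phis gT) (mkfactors G t).
  rewrite /mkfactors -map_comp; apply: eq_map => sec /=.
  by apply: Mp_simple_isog; rewrite isog_sym; apply: section_reprP.
rewrite !E; apply: perm_big; apply: perm_map; exact: JordanHolderUniqueness cs0 cs.
Qed.

Lemma Mp_isog (gT rT : finGroupType) (G : {group gT}) (H : {group rT}) :
  G \isog H -> Mp p G = Mp p H.
Proof.
case/isogP=> f injf eqH.
have -> : H = (f @* G)%G by apply: val_inj; rewrite /= eqH.
have [s cs] := exists_comps G.
pose s' := map (fun K : {group gT} => (f @* K)%G) s.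
have key : forall (K : {group gT}) t, K \subset G -> path [rel x y : {group gT} | maxnormal y x x] K t ->
   path [rel x y : {group rT} | maxnormal y x x] (f @* K)%G (map (fun K : {group gT} => (f @* K)%G) t)
   /\ pairmap (@Mp_factor p rT) (f @* K)%G (map (fun K : {group gT} => (f @* K)%G) t)
      = pairmap (@Mp_factor p gT) K t.
  move=> K t; elim: t K => [|L t IH] K sKG //= /andP[mLK pt].
  have sLK : L \subset K by apply: normal_sub (maxnormal_normal mLK).
  have sLG := subset_trans sLK sKG.
  have [IH1 IH2] := IH L sLG pt.
  split; first by rewrite IH1 andbT injm_maxnormal.
  rewrite IH2; congr (_ :: _); rewrite /Mp_factor; apply: Mp_simple_isog.
  rewrite isog_sym /=; exact: quo_injm_isog (maxnormal_normal mLK).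
move/compsP: (cs) => [ls ps].
have [k1 k2] := key G s (subxx _) ps.
rewrite (Mp_comps cs) (Mp_comps (s := s')) ?k2 //.
apply/compsP; split => //.
rewrite /s' last_map ls; apply: val_inj; exact: morphim1.
Qed.

Lemma Mp_normal (gT : finGroupType) (G N : {group gT}) :
  N <| G -> Mp p G = (Mp p N * Mp p (G / N)%G)%N.
Proof.
move=> nsNG.
have [sN csN] := exists_comps N.
have [sQ csQ] := exists_comps (G / N)%G.
pose pre := fun A : {group coset_of N} => (coset N @*^-1 A)%G.
have key : forall (A : {group coset_of N}) t,
   path [rel x y : {group coset_of N} | maxnormal y x x] A t ->
   path [rel x y : {group gT} | maxnormal y x x] (pre A) (map pre t)
   /\ pairmap (@Mp_factor p gT) (pre A) (map pre t)
      = pairmap (@Mp_factor p _) A t.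
  move=> A t; elim: t A => [|B t IH] A //= /andP[mBA pt].
  have nsBA := maxnormal_normal mBA.
  have [IH1 IH2] := IH B pt.
  have nsBA' : pre B <| pre A by rewrite morphpre_normal ?sub_im_coset.
  have iso := pre_factor_isog nsBA.
  split.
    rewrite IH1 andbT /= -quotient_simple // (isog_simple iso) quotient_simple //.
  rewrite IH2; congr (_ :: _); rewrite /Mp_factor; apply: Mp_simple_isog; exact: iso.
have preG : pre (G / N)%G = G by apply: val_inj; rewrite /= quotientGK.
move/compsP: (csQ) => [lQ pQ]; move/compsP: (csN) => [lN pN].
have [k1 k2] := key _ _ pQ.
rewrite preG in k1 k2.
have lastQ : last G (map pre sQ) = N.
  rewrite -preG last_map lQ; apply: val_inj; rewrite /=; apply: cosetpre1.
rewrite (Mp_comps (s := map pre sQ ++ sN)); last first.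
  apply/compsP; split; first by rewrite last_cat lastQ.
  by rewrite cat_path k1 lastQ.
rewrite pairmap_cat big_cat /= lastQ k2 -(Mp_comps csN) -(Mp_comps csQ) mulnC //.
Qed.


Lemma Mp_simple_pos (gT : finGroupType) (S : {group gT}) : 0 < Mp_simple p S.
Proof.
rewrite /Mp_simple; case: ifP => [_|_]; first by case: ifP.
rewrite /Mp_nonab; case: ex_minnP => m Hm _; rewrite lt0n; apply/eqP=> m0.
move: Hm; rewrite m0 => /forall_inP/(_ 1 (group1 _)); rewrite p_elt1 /=.
case/exists_inP=> s Ss /andP[_]; rewrite leqn0 => /eqP/cards0_eq/setP/(_ 1).
by rewrite !inE group1 mulg1 conj_autE // conj1g eqxx.
Qed.

Lemma Mp_pos (gT : finGroupType) (G : {group gT}) : 0 < Mp p G.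
Proof.
rewrite /Mp; move: (compseries G) => s; elim: s (G) => [|H s IH] K; first by rewrite /= big_nil.
by rewrite /= big_cons muln_gt0 IH andbT /Mp_factor Mp_simple_pos.
Qed.

Lemma Mp1 (gT : finGroupType) : Mp p (1%G : {group gT}) = 1%N.
Proof.
rewrite /Mp /compseries; have := xchooseP (exists_comps (1%G : {group gT})).
move/trivg_comps; rewrite eqxx => /esym/eqP->; by rewrite big_nil.
Qed.

Lemma Mp_normal_le (gT : finGroupType) (G N : {group gT}) : N <| G -> Mp p N <= Mp p G.
Proof. by move=> nsNG; rewrite (Mp_normal nsNG) leq_pmulr ?Mp_pos. Qed.

Lemma part3 (t : nat) (gT : 'I_t -> finGroupType)
          (Gi : forall i : 'I_t, {group gT i}) (G : {group prodG gT}) :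
      (forall i : 'I_t, [set proj i f | f in G] = Gi i :> {set gT i}) ->
      Mp p G <= \prod_(i < t) Mp p (Gi i).
Proof.
move=> surj.
have step : forall j, j <= t -> exists L : {group prodG gT},
   [/\ L <| G, (forall f, f \in L -> forall i : 'I_t, i < j -> proj i f = 1)
    & Mp p G <= Mp p L * \prod_(i < t | i < j) Mp p (Gi i)].
  elim=> [_|j IH ltjt].
    exists G; split; [exact: normal_refl | by [] | ].
    by rewrite big_pred0 ?muln1.
  have [L [nsLG HL HM]] := IH (ltnW ltjt).
  pose i0 := Ordinal ltjt.
  pose L' := (L :&: 'ker (projm gT i0))%G.
  exists L'; split.
  - rewrite /normal subIset ?(normal_sub nsLG) //= normsI ?(normal_norm nsLG) //.
    by apply: subset_trans (subsetT G) (normal_norm (ker_normal _)).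
  - move=> f; rewrite inE => /andP[Lf Kf] i; rewrite ltnS leq_eqVlt => /orP[/eqP ei|lti].
      have -> : i = i0 by apply: val_inj.
      by move/mker: Kf.
    exact: HL.
  have nsL'L : L' <| L := normalGI (subsetT L) (ker_normal _).
  have iso : (L / L')%G \isog projm gT i0 @* L by apply: first_isog_loc; rewrite subsetT.
  have nsim : projm gT i0 @* L <| Gi i0.
    have -> : Gi i0 = (projm gT i0 @* G)%G.
      by apply: val_inj; rewrite /= morphimEsub ?subsetT // -surj.
    exact: morphim_normal.
  apply: (leq_trans HM); rewrite (Mp_normal nsL'L) -mulnA leq_pmul2l ?Mp_pos //.
  rewrite [X in _ <= X](bigD1 i0) /=; last by rewrite ltnSn.
  rewrite [X in _ <= _ * X](eq_bigl (fun i : 'I_t => i < j)); last first.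
    move=> i /=; rewrite ltnS leq_eqVlt -val_eqE /=.
    by case: ltngtP.
  rewrite leq_mul2r; apply/orP; right.
  rewrite (Mp_isog iso); apply: Mp_normal_le; exact: nsim.
have [L [_ HL HM]] := step t (leqnn t).
have L1 : L = 1%G.
  apply/val_inj/trivgP/subsetP=> f Lf; rewrite inE; apply/eqP.
  by apply: prodG_eq1 => i; apply: HL.
rewrite L1 Mp1 mul1n in HM; apply: (leq_trans HM).
by rewrite (eq_bigl (fun _ => true)) // => i; rewrite ltn_ord.
Qed.

Lemma Mp_simple_group gT (S : {group gT}) : simple S -> Mp p S = Mp_simple p S.
Proof.
move=> simS.
have cs : comps S [:: 1%G] by rewrite /comps eqxx /= -simple_maxnormal simS.
rewrite (Mp_comps cs) /= big_cons big_nil muln1 /Mp_factor.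
apply: Mp_simple_isog; rewrite isog_sym; exact: quotient1_isog.
Qed.

Lemma Mp_qgroup q gT (N : {group gT}) : prime q -> q != p -> q.-group N -> Mp p N = #|N|.
Proof.
move=> pq qp; have [n] := ubnP #|N|; elim: n N => // n IH N /ltnSE-cN qN.
have [N1 | ntN] := eqVneq (N : {set gT}) 1.
  have -> : N = 1%G by apply: val_inj.
  by rewrite Mp1 cards1.
have [M maxM] := ex_maxnormal_ntrivg ntN.
have nsMN := maxnormal_normal maxM.
rewrite (Mp_normal nsMN) IH; first last.
- exact: pgroupS (normal_sub nsMN) qN.
- exact: leq_trans (proper_card (maxnormal_proper maxM)) cN.
have simQ : simple (N / M)%G by rewrite /= quotient_simple.
have qQ : q.-group (N / M) := quotient_pgroup M qN.
have prQ : prime #|N / M| := simple_sol_prime (pgroup_sol qQ) simQ.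
have eq : #|N / M| = q by move: qQ; rewrite /pgroup pnatE // => /eqP.
rewrite Mp_simple_group // /Mp_simple /= prQ eq (negbTE qp).
by rewrite -eq card_quotient ?normal_norm // Lagrange ?normal_sub.
Qed.

Lemma Ebound n gT (G N : {group gT}) (g : gT) : #|N| <= n -> N <| G -> g \in G -> p.-elt g ->
  #|N| <= Mp p N * #|[set x in N :* g | p.-elt x]|.
Proof.
elim: n gT G N g => [|n IH] gT G N g.
  by rewrite leqNgt cardG_gt0.
move=> cN nsNG Gg pg.
set P := [set x in N :* g | p.-elt x].
have gP : g \in P by rewrite inE pg andbT mem_rcoset mulgV group1.
have P0 : 0 < #|P| by apply/card_gt0P; exists g.
have gNN : g \in 'N(N) by rewrite (subsetP (normal_norm nsNG)).
have nNg : <[g]> \subset 'N(N) by rewrite cycle_subG.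
pose H := (<[g]> <*> N)%G.
have Hg : <[g]> * N = H by rewrite /H /= norm_joinEl.
have nsNH : N <| H by rewrite /normal joing_subr join_subG nNg normG.
have gH : g \in H by rewrite (subsetP (joing_subl _ _)) ?cycle_id.
have NgH : N :* g \subset H by rewrite mul_subG ?sub1set ?normal_sub.
case: (boolP [exists K : {group gT}, [&& K <| H, K \subset N, K != 1 :> {set gT} & K != N :> {set gT}]]).
- case/existsP=> K /and4P[nsKH sKN ntK neKN].
  have nsKN : K <| N := normalS sKN (normal_sub nsNH) nsKH.
  have nKH : H \subset 'N(K) := normal_norm nsKH.
  have nKN : N \subset 'N(K) := normal_norm nsKN.
  have gNK : g \in 'N(K) := subsetP nKH g gH.
  have nsNbHb : (N / K)%G <| (H / K)%G by rewrite /= quotient_normal.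
  have gbH : coset K g \in (H / K)%G by rewrite /= mem_quotient.
  have pgb : p.-elt (coset K g) := morph_p_elt (coset_morphism K) gNK pg.
  have cardN : #|N| = (#|K| * #|(N / K)%G|)%N by rewrite /= card_quotient // Lagrange.
  have K1 : 1 < #|K| by rewrite cardG_gt1.
  have cNb : #|(N / K)%G| <= n.
    rewrite -ltnS (leq_trans _ cN) // cardN -{1}(mul1n #|(N / K)%G|) ltn_mul2r K1 andbT.
    exact: cardG_gt0.
  have ltKN : #|K| < #|N| by rewrite proper_card // properEneq neKN sKN.
  have cK : #|K| <= n by rewrite -ltnS (leq_trans ltKN cN).
  set Qb := [set y in (N / K)%G :* coset K g | p.-elt y].
  have IH1 := IH _ _ _ _ cNb nsNbHb gbH pgb.
  pose lf (y : coset_of K) := odflt 1 [pick h in N :* g | p.-elt h && (coset K h == y)].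
  have lfP : forall y, y \in Qb -> [/\ lf y \in N :* g, lf y \in H, p.-elt (lf y) & coset K (lf y) = y].
    move=> y; rewrite inE => /andP[Qy py].
    rewrite /lf; case: pickP => [h /and3P[Nh ph /eqP ch] | none] /=.
      by split=> //; apply: (subsetP NgH).
    have [h Nh [ph ch]] := lift_pelt py.
    have NgK : g^-1 \in 'N(K) by rewrite groupV.
    have : h * g^-1 \in coset K @*^-1 (N / K).
      apply: mem_morphpre; first by rewrite groupM.
      rewrite morphM // morphV //.
      change (coset K h * (coset K g)^-1 \in N / K); by rewrite ch -mem_rcoset.
    rewrite quotientGK // -mem_rcoset => Nh'.
    by have := none h; rewrite Nh' ph ch eqxx.
  pose PK h := [set x in K :* h | p.-elt x].
  have IH2 : forall y, y \in Qb -> #|K| <= Mp p K * #|PK (lf y)|.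
    move=> y Qy; have [_ Hl pl _] := lfP y Qy; exact: IH _ _ _ _ cK nsKH Hl pl.
  have sub : forall y, y \in Qb -> PK (lf y) \subset [set x in P | coset K x == y].
    move=> y Qy; have [Nl Hl pl cl] := lfP y Qy.
    apply/subsetP=> x; rewrite !inE => /andP[Kx px]; rewrite px andbT.
    move: Kx; rewrite mem_rcoset => Kx.
    have -> : x = (x * (lf y)^-1) * lf y by rewrite mulgKV.
    rewrite coset_kerl // cl eqxx andbT.
    rewrite mem_rcoset -mulgA; apply: groupM; first exact: (subsetP sKN).
    by rewrite -mem_rcoset.
  have sumP : \sum_(y in Qb) #|PK (lf y)| <= #|P|.
    have -> : #|P| = \sum_(y : coset_of K) #|[set x in P | coset K x == y]|.
      rewrite -sum1_card (partition_big (coset K) xpredT) //=.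
      apply: eq_bigr => y _; rewrite -sum1_card; apply: eq_bigl => x; rewrite inE.
      by [].
    apply: (@leq_trans (\sum_(y in Qb) #|[set x in P | coset K x == y]|)).
      by apply: leq_sum => y Qy; exact: subset_leq_card (sub y Qy).
    rewrite [X in _ <= X](bigID (mem Qb)) /=; exact: leq_addr.
  have KQ : #|K| * #|Qb| <= Mp p K * #|P|.
    rewrite mulnC -sum_nat_const.
    apply: (@leq_trans (\sum_(y in Qb) Mp p K * #|PK (lf y)|)).
      by apply: leq_sum => y Qy; exact: IH2.
    by rewrite -big_distrr /= leq_mul2l sumP orbT.
  rewrite (Mp_normal nsKN) cardN.
  apply: leq_trans (leq_mul (leqnn #|K|) IH1) _.
  by rewrite mulnCA (mulnC (Mp p K)) -mulnA leq_mul2l KQ orbT.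
- move/existsPn => noK.
  have minN : forall K : {group gT}, K <| H -> K \subset N -> K :=: 1 \/ K :=: N.
    move=> K nsKH sKN; have := noK K; rewrite nsKH sKN /= negb_and !negbK.
    by case/orP=> /eqP->; [left|right].
  have [N1 | ntN] := eqVneq (N : {set gT}) 1.
    by rewrite N1 cards1 muln_gt0 Mp_pos.
  case: (boolP (solvable N)) => [solN | nsolN].
  + have minNH : minnormal N H.
      apply/mingroupP; rewrite ntN normal_norm //; split=> // K /andP[ntK nKH] sKN.
      have nsKH : K <| H by rewrite /normal (subset_trans sKN (normal_sub nsNH)) nKH.
      by case: (minN K nsKH sKN) => // K1; rewrite K1 eqxx in ntK.
    have [_ _ abN] := minnormal_solvable minNH (subxx N) solN.
    have qN := abelem_pgroup abN.
    have prq : prime (pdiv #|N|) by rewrite pdiv_prime // cardG_gt1.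
    case: (eqVneq (pdiv #|N|) p) => [eqp | neqp].
    * rewrite eqp in qN.
      have pH : p.-group H by rewrite -Hg pgroupM qN andbT.
      have PE : P = N :* g.
        apply/setP=> x; rewrite inE; case Nx: (x \in N :* g) => //=.
        exact: mem_p_elt pH (subsetP NgH x Nx).
      by rewrite PE card_rcoset leq_pmull ?Mp_pos.
    * by rewrite (Mp_qgroup prq neqp qN) leq_pmulr.
  + have [S minS sSN] := minnormal_exists ntN (normG N).
    have B := base_main nsNH minN minS sSN nsolN Hg pg.
    have simS := Ssimple nsNH minN minS sSN.
    have nonab := Snonab nsNH minN minS sSN nsolN.
    have npr : ~~ prime #|S|.
      by apply: contra nonab => pr; apply: cyclic_abelian; apply: prime_cyclic.
    have E1 : Mp_nonab p S = Mp p S by rewrite Mp_simple_group // /Mp_simple (negbTE npr).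
    apply: leq_trans B _; rewrite E1 leq_mul2r; apply/orP; right.
    exact: Mp_normal_le (nsSN minS sSN).
Qed.

Theorem part2 gT (G : {group gT}) : #|G| <= Mp p G * #|Ord G p|.
Proof.
have := Ebound (leqnn #|G|) (normal_refl G) (group1 G) (p_elt1 gT p).
by rewrite rcoset1.
Qed.


End Main.

Unset Implicit Arguments.
Theorem corollary2p3 (p : nat) (hp : prime p) :
  (* (i) *)
  (forall (gT : finGroupType) (G N : {group gT}),
      N <| G -> Mp p G = (Mp p N * Mp p (G / N)%G)%N) /\
  (* (ii) |G| / |Ord(G,p)| <= M_p(G), written without division *)
  (forall (gT : finGroupType) (G : {group gT}),
      #|G| <= Mp p G * #|Ord G p|) /\
  (* (iii) subdirect subgroups of G_1 x ... x G_t *)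
  (forall (t : nat) (gT : 'I_t -> finGroupType)
          (Gi : forall i : 'I_t, {group gT i}) (G : {group prodG gT}),
      G \subset [set f : prodG gT | [forall i, proj i f \in Gi i]] ->
      (forall i : 'I_t, [set proj i f | f in G] = Gi i :> {set gT i}) ->
      Mp p G <= \prod_(i < t) Mp p (Gi i)).
Proof.
split; first by move=> gT G N; exact: Mp_normal.
split; first by move=> gT G; exact: part2.
by move=> t gT Gi G _ surj; exact: part3.
Qed.
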